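(* Let $(Z,\Delta)$ be a foliated surface. Every regular leaf of $\Delta$ is non-special; equivalently, every special leaf of $\Delta$ is singular.
   Context: A foliated surface is a pair $(Z,\Delta)$ with $Z$ a two-dimensional topological manifold (possibly with boundary) and $\Delta$ a one-dimensional foliation on $Z$ such that each connected component of $\partial Z$ is a leaf. For $A\subset Z$ its saturation $\mathrm{Sat}(A)$ is the union of all leaves meeting $A$. For a leaf $\omega$ let $\mathrm{hcl}(\omega)=\bigcap_{N}\overline{\mathrm{Sat}(N)}$, where $N$ runs over all open neighbourhoods of $\omega$; $\omega$ is special if $\omega\neq\mathrm{hcl}(\omega)$. A leaf $\omega\subset \operatorname{Int} Z$ is regular if there is a saturated neighbourhood $U$ of $\omega$ such that $(\overline{U},U)$ is foliated homeomorphic (leaves to leaves) to $(\mathbb{R}\times[-1,1],\mathbb{R}\times(-1,1))$ foliated by horizontal lines, with $\omega$ going to $\mathbb{R}\times 0$; a leaf $\omega\subset\partial Z$ is regular if there is such $U$ with $(\overline{U},U)$ foliated homeomorphic to $(\mathbb{R}\times[0,1],\mathbb{R}\times[0,1))$ with $\omega$ going to $\mathbb{R}\times 0$. Non-regular leaves are singular. *)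

(* Defs.v *)
From HB Require Import structures.
From mathcomp Require Import all_boot all_order all_algebra.
From mathcomp Require Import all_classical all_reals all_analysis.
From mathcomp Require Import Rstruct Rstruct_topology.
Set Implicit Arguments. Unset Strict Implicit. Unset Printing Implicit Defensive.
Import Order.TTheory GRing.Theory Num.Theory.
Local Open Scope classical_set_scope.
Local Open Scope ring_scope.

Definition plane := (Rdefinitions.R * Rdefinitions.R)%type.
Notation R := Rdefinitions.R.

Definition homeo_on (X Y : topologicalType) (f : X -> Y) (g : Y -> X)
    (A : set X) (B : set Y) : Prop :=
  [/\ f @` A = B, (forall x, A x -> g (f x) = x),
      (forall y, B y -> f (g y) = y),
      {within A, continuous f} & {within B, continuous g}].

(** Models of foliated charts: (-1,1)x(-1,1) and (-1,1)x[0,1),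
    both foliated by horizontal segments. *)
Definition int_model : set plane :=
  [set q | -1 < q.1 < 1 /\ -1 < q.2 < 1].
Definition bd_model : set plane :=
  [set q | -1 < q.1 < 1 /\ 0 <= q.2 < 1].

Definition hline (c : R) : set plane := [set q | q.2 = c].

Section Foliation.
Variable Z : topologicalType.

Definition interior_pts : set Z :=
  [set p | exists (W : set Z) (V : set plane) (f : Z -> plane) (g : plane -> Z),
     [/\ open W, W p, open V & homeo_on f g W V]].
Definition boundary_pts : set Z := ~` interior_pts.

Definition half_plane : set plane := [set q | 0 <= q.2].
Definition is_surface : Prop :=
  [/\ hausdorff_space Z, @second_countable Z &
      forall p : Z, exists (W : set Z) (O : set plane) (f : Z -> plane)
        (g : plane -> Z),
        [/\ open W, W p, open O & homeo_on f g W (O `&` half_plane)]].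

Variable Delta : set (set Z).

(** a foliated chart for the partition Delta: a homeomorphism of an open
    set W onto a model M such that every leaf meets W in a union of
    horizontal segments (plaques) *)
Definition fol_chart (W : set Z) (f : Z -> plane) (g : plane -> Z)
    (M : set plane) : Prop :=
  [/\ open W, M = int_model \/ M = bd_model, homeo_on f g W M &
      forall L, Delta L -> exists S : set R,
        f @` (L `&` W) = M `&` [set q | S q.2]].

Definition plaque (P : set Z) : Prop :=
  exists W f g M c, fol_chart W f g M /\ P = g @` (M `&` hline c) /\
                    (M `&` hline c) !=set0.

Definition is_foliation : Prop :=
  [/\ (forall L, Delta L -> L !=set0),
      (forall x : Z, exists L, Delta L /\ L x),
      (forall L L', Delta L -> Delta L' -> L `&` L' !=set0 -> L = L'),
      (forall p : Z, exists W f g M, fol_chart W f g M /\ W p) &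
      (forall L, Delta L -> forall x y, L x -> L y ->
         exists (n : nat) (P : nat -> set Z),
           [/\ forall i, (i <= n)%N -> plaque (P i) /\ P i `<=` L,
               P 0%N x, P n y &
               forall i, (i < n)%N -> P i `&` P i.+1 !=set0])].

Definition foliated_surface : Prop :=
  [/\ is_surface, is_foliation &
      forall x, boundary_pts x -> Delta (connected_component boundary_pts x)].

Definition Sat (A : set Z) : set Z :=
  [set x | exists L, [/\ Delta L, L x & L `&` A !=set0]].

Definition hcl (omega : set Z) : set Z :=
  [set x | forall N : set Z, open N -> omega `<=` N -> closure (Sat N) x].

Definition special (omega : set Z) : Prop := omega <> hcl omega.

Definition sat_nbhd (omega U : set Z) : Prop :=
  Sat U = U /\ exists O, [/\ open O, omega `<=` O & O `<=` U].

(** regular leaf in the interior: (cl U, U) is foliated homeomorphic to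
    (R x [-1,1], R x (-1,1)) with horizontal foliation, omega -> R x 0.
    Leaves to leaves: the horizontal lines R x c, -1<c<1, go to leaves of
    Delta (U is saturated), and the lines R x {-1}, R x {1} in the
    frontier lie in leaves of Delta. *)
Definition regular_int (omega : set Z) : Prop :=
  exists U (h : Z -> plane) (g : plane -> Z),
  [/\ sat_nbhd omega U,
      homeo_on h g (closure U) [set q | -1 <= q.2 <= 1],
      h @` U = [set q | -1 < q.2 < 1],
      omega = g @` hline 0 &
      (forall c : R, -1 < c < 1 -> Delta (g @` hline c)) /\
      (forall c : R, c = -1 \/ c = 1 -> exists L, Delta L /\ g @` hline c `<=` L)].

Definition regular_bd (omega : set Z) : Prop :=
  exists U (h : Z -> plane) (g : plane -> Z),
  [/\ sat_nbhd omega U,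
      homeo_on h g (closure U) [set q | 0 <= q.2 <= 1],
      h @` U = [set q | 0 <= q.2 < 1],
      omega = g @` hline 0 &
      (forall c : R, 0 <= c < 1 -> Delta (g @` hline c)) /\
      (exists L, Delta L /\ g @` hline 1 `<=` L)].

Definition regular (omega : set Z) : Prop :=
  (omega `<=` interior_pts /\ regular_int omega) \/
  (omega `<=` boundary_pts /\ regular_bd omega).

Definition singular (omega : set Z) : Prop := ~ regular omega.

End Foliation.

(* Main.v *)
Require Import Defs.
From mathcomp Require Import all_boot all_order all_algebra.
From mathcomp Require Import all_classical all_reals all_analysis.
From mathcomp Require Import Rstruct Rstruct_topology lra.
Import Order.TTheory GRing.Theory Num.Theory.
Local Open Scope classical_set_scope.
Local Open Scope ring_scope.


Lemma key (Z : topologicalType) (Delta : set (set Z)) (omega O A : set Z)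
  (B : set plane) (h : Z -> plane) (g : plane -> Z) :
  (forall L L', Delta L -> Delta L' -> L `&` L' !=set0 -> L = L') ->
  Delta omega -> open O -> omega `<=` O -> O `<=` A -> closed A ->
  homeo_on h g A B -> omega = g @` hline 0 -> hline 0 `<=` B ->
  (forall y, O y -> Delta (g @` hline (h y).2) /\ hline (h y).2 `<=` B) ->
  omega = hcl Delta omega.
Proof.
move=> part Dom oO omO OA cA [hAB hA hB hc _] omeq h0B leaf.
have gB q : B q -> A (g q).
  by rewrite -hAB => -[a Aa <-]; rewrite hA.
set k := fun z => (h z).2.
have kc y : A y -> k @ within A (nbhs y) --> k y.
  move=> Ay; have := (proj1 (subspace_continuousP _ _) hc) y Ay.
  move=> hcv; apply: (cvg_comp _ _ hcv).
  move=> P nP; exists (setT, P) => /=; first split => //; first exact: (@filterT _ _ (nbhs_filter _)).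
  by move=> [? ?] [].
have satN N z : N `<=` O -> Sat Delta N z -> exists y, [/\ N y, A z & k z = k y].
  move=> NO [L [DL Lz [y [Ly Ny]]]].
  have Oy := NO y Ny; have [Dl lB] := leaf y Oy.
  have eL : L = g @` hline (h y).2.
    apply: part => //; exists y; split => //; exists (h y) => //; exact: hA (OA _ Oy).
  move: Lz; rewrite eL => -[q qh <-]; exists y; split => //; first exact: gB (lB _ qh).
  by rewrite /k hB ?qh //; exact: lB.
apply/seteqP; split.
  move=> x omx N oN omN; apply: subset_closure; exists omega; split => //.
  by exists x; split => //; exact: omN.
move=> x hx; have [//|nox] := pselect (omega x); exfalso.
have [Ax|nAx] := pselect (A x); last first.
  have := hx O oO omO (~` A) (open_nbhs_nbhs (conj (closed_openC cA) nAx)).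
  by move=> [z [/(satN O z (@subset_refl _ _)) [y [_ Az _]]]].
have c0 : k x != 0.
  apply/eqP => kx0; apply: nox; rewrite omeq; exists (h x) => //; exact: hA.
have [e [e0 he]] : exists e : R, 0 < e /\ (k x < - e \/ e < k x).
  have [kneg|kpos|kz] := ltgtP (k x) 0.
  - by exists (- k x / 2); split; [lra| left; lra].
  - by exists (k x / 2); split; [lra| right; lra].
  - by move: c0; rewrite kz eqxx.
pose N := O `&` [set z | - e < k z /\ k z < e].
have oN : open N.
  rewrite openE => y [Oy [y1 y2]].
  have Ay := OA _ Oy.
  have nQ : nbhs (k y) ([set t | -e < t] `&` [set t | t < e]).
    by apply: open_nbhs_nbhs; split; [apply: openI; [exact: open_gt|exact: open_lt]|].
  have W : nbhs y [set z | A z -> ([set t | -e < t] `&` [set t | t < e]) (k z)] := kc y Ay _ nQ.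
  change (nbhs y N); apply: (filterS2 _ _ W (open_nbhs_nbhs (conj oO Oy))) => z /= Wz Oz.
  by have [] := Wz (OA _ Oz); split.
have omN : omega `<=` N.
  move=> y omy; split; first exact: omO.
  move: omy; rewrite omeq => -[q q0 <-].
  rewrite /= /k hB; last exact: h0B.
  by rewrite q0; split; lra.
have nP : nbhs (k x) ([set t | t < -e] `|` [set t | e < t]).
  apply: open_nbhs_nbhs; split; first by apply: openU; [exact: open_lt|exact: open_gt].
  by case: he => ?; [left|right].
have := kc x Ax _ nP; rewrite /= /within => W.
have [z [Sz Wz]] := hx N oN omN _ W.
have [y [[_ [y1 y2]] Az kz]] := satN N z (@subIsetl _ _ _) Sz.
have := Wz Az; rewrite /= kz => -[/= H|/= H]; move: y1 y2 H; clear; move=> y1 y2 H; lra.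
Qed.

Theorem lemma2p6 (Z : topologicalType) (Delta : set (set Z)) :
  foliated_surface Delta ->
  forall omega : set Z, Delta omega -> regular Delta omega -> ~ special Delta omega.
Proof.
move=> [_ [_ _ part _ _] _] omega Dom [[_ reg]|[_ reg]] Hsp; apply: Hsp.
- case: reg => U [h [g [sn hom hU omeq [lv _]]]]; case: sn => satU [ Ob [oO omO OU]].
  apply: (@key _ _ _ _ _ _ _ _ part Dom oO omO _ (@closed_closure _ U) hom omeq).
    by move=> z /OU; exact: subset_closure.
    by move=> q /= ->; apply/andP; split; lra.
  move=> y Oy.
  have : [set q : plane | -1 < q.2 < 1] (h y) by rewrite -hU; exists y => //; exact: OU.
  move=> /= /andP[a b]; split; first by apply: lv; apply/andP.
  by move=> q /= ->; apply/andP; split; lra.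
- case: reg => U [h [g [sn hom hU omeq [lv _]]]]; case: sn => satU [ Ob [oO omO OU]].
  apply: (@key _ _ _ _ _ _ _ _ part Dom oO omO _ (@closed_closure _ U) hom omeq).
    by move=> z /OU; exact: subset_closure.
    by move=> q /= ->; apply/andP; split; lra.
  move=> y Oy.
  have : [set q : plane | 0 <= q.2 < 1] (h y) by rewrite -hU; exists y => //; exact: OU.
  move=> /= /andP[a b]; split; first by apply: lv; apply/andP.
  by move=> q /= ->; apply/andP; split; lra.
Qed.
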